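(* Fix an integer $n\ge 0$ and $\mathbb K\in\{\mathbb R,\mathbb C\}$. Let $\mathcal B^0\supset\mathcal B^1\supset\cdots\supset\mathcal B^{n+1}$ be linear subspaces, and let $\mathcal L=\mathcal L_0,\dots,\mathcal L_n$ and $\mathcal L(\epsilon,\cdot):\mathcal B^0\to\mathcal B^0$ ($\epsilon\in(0,1)$) be linear operators satisfying conditions (I), (II), (III) of the context. Assume also: (a) each $\mathcal B^k$ is a Banach space (with norm $\|\cdot\|_{\mathcal B^k}$); (b) $\nu$ is a bounded linear functional on $\mathcal B^0$, $\mathcal L_j$ is a bounded operator $\mathcal B^i\to\mathcal B^{i-j}$ for $j=0,\dots,n$ and $i=j,\dots,n+1$, $\sup_{\epsilon}\|\kappa(\epsilon,\cdot)\|_{\mathcal B^0\to\mathbb K}<+\infty$, and $\mathcal R_\lambda$ is bounded as an operator $\mathcal B^1\to\mathcal B^0$ and as an operator $\mathcal B^j\to\mathcal B^j$ for $j=1,\dots,n+1$; (c) $\lim_{\epsilon\to0}\|\tilde{\mathcal L}_j(\epsilon,\cdot)\|_{\mathcal B^{j+1}\to\mathcal B^0}=0$ for each $j=0,\dots,n$. Put $\|f\|_k:=\max_{1\le i\le k}\|f\|_{\mathcal B^i}$ and $\mathcal B^k_1:=(\mathcal B^k,\|\cdot\|_k)$. Then each $\kappa_k$ is a bounded linear functional on $\mathcal B^k_1$ and $\|\tilde\kappa_k(\epsilon,\cdot)\|_{\mathcal B_1^{k+1}\to\mathbb K}\to0$ as $\epsilon\to0$ for each $0\le k\le n$. Moreover,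 if there is $1_{\mathcal B}\in\mathcal B^{n+1}$ with $\nu(1_{\mathcal B})=\nu(\epsilon,1_{\mathcal B})=1$ for all $\epsilon$ and $\sup_\epsilon|\nu(\epsilon,h)|<+\infty$, then each $\nu_k$ is a bounded linear functional on $\mathcal B^k_1$ and $\|\tilde\nu_k(\epsilon,\cdot)\|_{\mathcal B_1^{k+1}\to\mathbb K}\to0$.
   Context: Conditions. (I) For each $j=0,\dots,n$ and $i=j,\dots,n$, $\mathcal L_j$ maps $\mathcal B^i$ linearly into $\mathcal B^{i-j}$. (II) $\mathcal L:\mathcal B^0\to\mathcal B^0$ decomposes as $\mathcal L=\lambda(h\otimes\nu)+\mathcal R$ with $(\lambda,h,\nu)\in\mathbb K\times\mathcal B^{n+1}\times(\mathcal B^0)^*$ ($(\mathcal B^0)^*$ = linear functionals), $\lambda\neq0$, $\nu\circ\mathcal L=\lambda\nu$, $\mathcal Lh=\lambda h$, $\nu(h)=1$, where $(h\otimes\nu)f=\nu(f)h$; and there is a linear subspace $\mathcal D^0$ with $\mathcal B^1\subset\mathcal D^0\subset\mathcal B^0$ such that every $f\in\mathcal D^0$ has exactly one $g\in\mathcal B^0$ with $(\mathcal R-\lambda\mathcal I)g=f$; this inverse $\mathcal R_\lambda:\mathcal D^0\to\mathcal B^0$ satisfies $\mathcal R_\lambda\mathcal B^i\subset\mathcal B^i$ for $1\le i\le n+1$. (III) For each $\epsilon$ there are $\lambda(\epsilon)\in\mathbb K$, $\nu(\epsilon,\cdot)\in(\mathcal B^0)^*$ with $\nu(\epsilon,\mathcal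 L(\epsilon,f))=\lambda(\epsilon)\nu(\epsilon,f)$ for all $f$ and $\nu(\epsilon,h)\ne0$. Notation. $\tilde{\mathcal L}_j(\epsilon,\cdot):=(\mathcal L(\epsilon,\cdot)-\mathcal L-\sum_{i=1}^j\mathcal L_i\epsilon^i)/\epsilon^j$; $\kappa(\epsilon,f):=\nu(\epsilon,f)/\nu(\epsilon,h)$. Coefficients: $\kappa_0=\nu$, and recursively for $k\ge1$, $\lambda_k=\sum_{j=1}^k\kappa_{k-j}(\mathcal L_jh)$, $\kappa_k(f)=\sum_{j=1}^k\kappa_{k-j}((\lambda_j\mathcal I-\mathcal L_j)\mathcal R_\lambda f)$. Remainders, for $0\le k\le n$: $\tilde\lambda_k(\epsilon):=(\lambda(\epsilon)-\lambda-\sum_{i=1}^k\lambda_i\epsilon^i)/\epsilon^k$ and $\tilde\kappa_k(\epsilon,f):=(\kappa(\epsilon,f)-\nu(f)-\sum_{i=1}^k\kappa_i(f)\epsilon^i)/\epsilon^k$ for $f\in\mathcal B^{k+1}$. Given $1_{\mathcal B}$, set $\nu_0=\nu$ and $\nu_k=\kappa_k+\sum_{i=1}^k\Big(\sum_{l=1}^i\sum_{\substack{j_1,\dots,j_l\ge1\\ j_1+\cdots+j_l=i}}(-1)^l\kappa_{j_1}(1_{\mathcal B})\cdots\kappa_{j_l}(1_{\mathcal B})\Big)\kappa_{k-i}$, and $\tilde\nu_k(\epsilon,f):=(\nu(\epsilon,f)-\sum_{i=0}^k\nu_i(f)\epsilon^i)/\epsilon^k$. $\|\cdot\|_{X\to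 Y}$ denotes operator norm. *)

(* Defs.v *)
From HB Require Import structures.
From mathcomp Require Import all_boot all_order all_algebra.
From mathcomp Require Import complex.
From mathcomp Require Import reals.
Set Implicit Arguments. Unset Strict Implicit. Unset Printing Implicit Defensive.
Import Order.TTheory GRing.Theory Num.Theory.
Local Open Scope ring_scope.

Definition Kfield (R : realType) (isC : bool) : numFieldType :=
  if isC then (R[i] : numFieldType) else (R : numFieldType).

Section Defs.
Variables (K : numFieldType) (V : lmodType K).

Definition subspace (A : pred V) : Prop :=
  0 \in A /\ forall (a : K) x y, x \in A -> y \in A -> a *: x + y \in A.

Definition linear_on (W : lmodType K) (A : pred V) (f : V -> W) : Prop :=
  forall (a : K) x y, x \in A -> y \in A -> f (a *: x + y) = a *: f x + f y.

Definition linear_fun (A : pred V) (phi : V -> K) : Prop :=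
  forall (a : K) x y, x \in A -> y \in A -> phi (a *: x + y) = a * phi x + phi y.

(* N is a norm on A (norm values in K, nonnegative hence real) *)
Definition norm_on (A : pred V) (N : V -> K) : Prop :=
  [/\ forall x, x \in A -> 0 <= N x,
      forall x, x \in A -> N x = 0 -> x = 0,
      forall (a : K) x, x \in A -> N (a *: x) = `|a| * N x
    & forall x y, x \in A -> y \in A -> N (x + y) <= N x + N y].

Definition complete_on (A : pred V) (N : V -> K) : Prop :=
  forall u : nat -> V, (forall m, u m \in A) ->
    (forall e : K, 0 < e -> exists M, forall p q, (M <= p)%N -> (M <= q)%N ->
        N (u p - u q) < e) ->
    exists2 l, l \in A & forall e : K, 0 < e -> exists M, forall p, (M <= p)%N ->
        N (u p - l) < e.

Definition banach (A : pred V) (N : V -> K) : Prop :=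
  [/\ subspace A, norm_on A N & complete_on A N].

Definition bounded_op (A : pred V) (NA : V -> K) (B : pred V) (NB : V -> K)
  (T : V -> V) : Prop :=
  (forall x, x \in A -> T x \in B) /\
  exists C : K, forall x, x \in A -> NB (T x) <= C * NA x.

Definition bounded_fun (A : pred V) (NA : V -> K) (phi : V -> K) : Prop :=
  exists C : K, forall x, x \in A -> `|phi x| <= C * NA x.

Definition op_norm_to0 (A : pred V) (NA : V -> K) (NB : V -> K)
  (T : K -> V -> V) : Prop :=
  forall d : K, 0 < d -> exists2 eta : K, 0 < eta &
    forall eps : K, 0 < eps -> eps < 1 -> eps < eta ->
      forall x, x \in A -> NB (T eps x) <= d * NA x.

Definition fun_norm_to0 (A : pred V) (NA : V -> K) (phi : K -> V -> K) : Prop :=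
  forall d : K, 0 < d -> exists2 eta : K, 0 < eta &
    forall eps : K, 0 < eps -> eps < 1 -> eps < eta ->
      forall x, x \in A -> `|phi eps x| <= d * NA x.

(* ||f||_k := max_{1<=i<=k} ||f||_{B^i}  (for k = 0 we use ||f||_{B^0}) *)
Definition normk (N : nat -> V -> K) (k : nat) (f : V) : K :=
  if k == 0%N then N 0%N f else \big[Num.max/0]_(1 <= i < k.+1) N i f.

Variables (L : nat -> V -> V) (nu : V -> K) (h : V) (Rlam : V -> V).

Definition lamT (kap : nat -> V -> K) (j : nat) : K :=
  \sum_(1 <= i < j.+1) kap (j - i)%N (L i h).

(* kapT m i = kappa_i for i <= m *)
Fixpoint kapT (m : nat) : nat -> V -> K :=
  match m with
  | 0%N => fun _ => nu
  | m'.+1 => let kp := kapT m' in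
      fun i => if (i <= m')%N then kp i else
        fun f => \sum_(1 <= j < m'.+2)
                   kp (m'.+1 - j)%N (lamT kp j *: Rlam f - L j (Rlam f))
  end.

Definition kappa_coef (k : nat) : V -> K := kapT k k.
Definition lambda_coef (k : nat) : K := lamT (kapT k) k.

Definition comp_coef (one : V) (i : nat) : K :=
  \sum_(1 <= l < i.+1)
    \sum_(js : {ffun 'I_l -> 'I_i.+1} |
           [forall m, (0 < (js m : nat))%N] && ((\sum_(m < l) (js m : nat))%N == i))
      (-1) ^+ l * \prod_(m < l) kappa_coef (js m) one.

Definition nu_coef (one : V) (k : nat) : V -> K :=
  fun f => kappa_coef k f +
           \sum_(1 <= i < k.+1) comp_coef one i * kappa_coef (k - i)%N f.

End Defs.

(* Main.v *)
Require Import Defs.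
From HB Require Import structures.
From mathcomp Require Import all_boot all_order all_algebra.
From mathcomp Require Import complex.
From mathcomp Require Import reals.
From mathcomp Require Import ring zify.
Import Order.TTheory GRing.Theory Num.Theory.
Local Open Scope ring_scope.
Set Implicit Arguments. Unset Strict Implicit. Unset Printing Implicit Defensive.

Section Gen.
Variables (K : numFieldType) (V : lmodType K).
Implicit Types (A : pred V) (x y : V) (a : K).

Lemma sub0 A : subspace A -> 0 \in A. Proof. by case. Qed.
Lemma subD A x y : subspace A -> x \in A -> y \in A -> x + y \in A.
Proof. by move=> [_ H] hx hy; have := H 1 x y hx hy; rewrite scale1r. Qed.
Lemma subZ A a x : subspace A -> x \in A -> a *: x \in A.
Proof. by move=> [h0 H] hx; have := H a x 0 hx h0; rewrite addr0. Qed.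
Lemma subN A x : subspace A -> x \in A -> - x \in A.
Proof. by move=> sA hx; rewrite -scaleN1r subZ. Qed.
Lemma subB A x y : subspace A -> x \in A -> y \in A -> x - y \in A.
Proof. by move=> sA hx hy; rewrite subD // subN. Qed.
Lemma sub_sum A (I : Type) (r : seq I) (P : pred I) (F : I -> V) :
  subspace A -> (forall i, P i -> F i \in A) -> \sum_(i <- r | P i) F i \in A.
Proof.
move=> sA HF; elim: r => [|i r IH]; first by rewrite big_nil sub0.
by rewrite big_cons; case: ifP => Pi //; rewrite subD // HF.
Qed.

Lemma lf0 A (phi : V -> K) : subspace A -> linear_fun A phi -> phi 0 = 0.
Proof.
move=> sA H; have := H 1 0 0 (sub0 sA) (sub0 sA).
rewrite scale1r addr0 mul1r => e.
by rewrite -[RHS](subrr (phi 0)) {2}e addrK.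
Qed.
Lemma lfD A (phi : V -> K) x y : subspace A -> linear_fun A phi ->
  x \in A -> y \in A -> phi (x + y) = phi x + phi y.
Proof. by move=> sA H hx hy; have := H 1 x y hx hy; rewrite scale1r mul1r. Qed.
Lemma lfZ A (phi : V -> K) a x : subspace A -> linear_fun A phi ->
  x \in A -> phi (a *: x) = a * phi x.
Proof.
by move=> sA H hx; have := H a x 0 hx (sub0 sA); rewrite addr0 (lf0 sA H) addr0.
Qed.
Lemma lfN A (phi : V -> K) x : subspace A -> linear_fun A phi ->
  x \in A -> phi (- x) = - phi x.
Proof. by move=> sA H hx; rewrite -scaleN1r (lfZ _ sA H hx) mulN1r. Qed.
Lemma lfB A (phi : V -> K) x y : subspace A -> linear_fun A phi ->
  x \in A -> y \in A -> phi (x - y) = phi x - phi y.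
Proof. by move=> sA H hx hy; rewrite (lfD sA H) ?subN // (lfN sA H). Qed.
Lemma lf_sum A (phi : V -> K) (I : Type) (r : seq I) (P : pred I) (F : I -> V) :
  subspace A -> linear_fun A phi -> (forall i, P i -> F i \in A) ->
  phi (\sum_(i <- r | P i) F i) = \sum_(i <- r | P i) phi (F i).
Proof.
move=> sA H HF; elim: r => [|i r IH]; first by rewrite !big_nil (lf0 sA H).
rewrite !big_cons; case: ifP => Pi //.
by rewrite (lfD sA H) ?IH // ?HF // sub_sum.
Qed.

Lemma lo0 A (f : V -> V) : subspace A -> linear_on A f -> f 0 = 0.
Proof.
move=> sA H; have := H 1 0 0 (sub0 sA) (sub0 sA).
rewrite !scale1r addr0 => e.
by rewrite -[RHS](subrr (f 0)) {2}e addrK.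
Qed.
Lemma loD A (f : V -> V) x y : subspace A -> linear_on A f ->
  x \in A -> y \in A -> f (x + y) = f x + f y.
Proof. by move=> sA H hx hy; have := H 1 x y hx hy; rewrite !scale1r. Qed.
Lemma loZ A (f : V -> V) a x : subspace A -> linear_on A f ->
  x \in A -> f (a *: x) = a *: f x.
Proof.
by move=> sA H hx; have := H a x 0 hx (sub0 sA); rewrite addr0 (lo0 sA H) addr0.
Qed.
Lemma loN A (f : V -> V) x : subspace A -> linear_on A f ->
  x \in A -> f (- x) = - f x.
Proof. by move=> sA H hx; rewrite -scaleN1r (loZ _ sA H hx) scaleN1r. Qed.
Lemma loB A (f : V -> V) x y : subspace A -> linear_on A f ->
  x \in A -> y \in A -> f (x - y) = f x - f y.
Proof. by move=> sA H hx hy; rewrite (loD sA H) ?subN // (loN sA H). Qed.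

Lemma no_ge0 A (M : V -> K) x : norm_on A M -> x \in A -> 0 <= M x.
Proof. by case=> H _ _ _ /H. Qed.
Lemma noN A (M : V -> K) x : subspace A -> norm_on A M -> x \in A -> M (- x) = M x.
Proof. by move=> sA [_ _ H _] hx; rewrite -scaleN1r H // normrN normr1 mul1r. Qed.
Lemma noZB A (M : V -> K) a x y : subspace A -> norm_on A M -> x \in A -> y \in A ->
  M (a *: x - y) <= `|a| * M x + M y.
Proof.
move=> sA hM hx hy; case: (hM) => _ _ HZ HD.
by rewrite -(HZ a x hx) -(noN sA hM hy) HD ?subZ ?subN.
Qed.
Lemma noD A (M : V -> K) x y : norm_on A M -> x \in A -> y \in A ->
  M (x + y) <= M x + M y.
Proof. by case=> _ _ _ H; apply: H. Qed.
Lemma noZ A (M : V -> K) a x : norm_on A M -> x \in A -> M (a *: x) = `|a| * M x.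
Proof. by case=> _ _ H _; apply: H. Qed.

End Gen.

Lemma pos_const (K : numFieldType) (T : Type) (P : T -> Prop) (a b : T -> K) (C : K) :
  (forall x, P x -> 0 <= a x) -> (forall x, P x -> 0 <= b x) ->
  (forall x, P x -> a x <= C * b x) -> forall x, P x -> a x <= `|C| * b x.
Proof.
move=> ha hb H x Px; have h1 := H x Px.
have h2 : 0 <= C * b x by apply: le_trans (ha x Px) h1.
by rewrite -(ger0_norm (hb x Px)) -normrM ger0_norm.
Qed.

Lemma fin_const (K : numFieldType) (Q : nat -> K -> Prop) m :
  (forall p C C', Q p C -> C <= C' -> Q p C') ->
  (forall p, (p < m)%N -> exists2 C, 0 <= C & Q p C) ->
  exists2 C, 0 <= C & forall p, (p < m)%N -> Q p C.
Proof.
move=> Hm; elim: m => [|m IH] H; first by exists 0.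
case: IH => [p hp|C1 C10 H1]; first by apply: H; rewrite ltnS ltnW.
case: (H m (ltnSn m)) => C2 C20 H2.
exists (C1 + C2); first by rewrite addr_ge0.
move=> p; rewrite ltnS leq_eqVlt => /orP[/eqP->|hp].
  by apply: Hm H2 _; rewrite lerDr.
by apply: Hm (H1 p hp) _; rewrite lerDl.
Qed.

Lemma lin3 (K : numFieldType) (V : lmodType K) (a : K) (u1 u2 u3 v1 v2 v3 : V) :
  (a *: u1 + v1) - (a *: u2 + v2) - (a *: u3 + v3) =
  a *: (u1 - u2 - u3) + (v1 - v2 - v3).
Proof.
rewrite !scalerBr !opprD !addrA; congr (_ + _).
rewrite [LHS]addrAC; congr (_ + _).
by rewrite (addrAC (a *: u1) v1) addrAC.
Qed.

Lemma lin2 (K : numFieldType) (V : lmodType K) (a : K) (u1 u2 v1 v2 : V) :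
  (a *: u1 + v1) - (a *: u2 + v2) = a *: (u1 - u2) + (v1 - v2).
Proof.
rewrite scalerBr opprD !addrA; congr (_ + _).
by rewrite addrAC.
Qed.

Lemma tri0 (Z : nmodType) (G : nat -> nat -> Z) k :
  \sum_(0 <= s < k.+1) \sum_(0 <= m < (k - s)%N.+1) G s m =
  \sum_(0 <= t < k.+1) \sum_(0 <= s < t.+1) G s (t - s)%N.
Proof.
elim: k => [|k IH]; first by rewrite !big_nat1.
rewrite big_nat_recr //= [in RHS]big_nat_recr //= -IH subnn big_nat1.
rewrite (eq_big_nat _ _ (F2 := fun s => \sum_(0 <= m < (k - s)%N.+1) G s m + G s (k.+1 - s)%N));
  last first.
  by move=> s /andP[_ hs]; rewrite subSn // big_nat_recr //= subSn.
rewrite big_split /= -addrA; congr (_ + _).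
by rewrite [in RHS]big_nat_recr //= subnn.
Qed.




Lemma tri1 (Z : nmodType) (G : nat -> nat -> Z) k :
  \sum_(1 <= s < k.+1) \sum_(0 <= m < (k - s)%N.+1) G s m =
  \sum_(1 <= t < k.+1) \sum_(1 <= s < t.+1) G s (t - s)%N.
Proof.
have E := tri0 (fun s m => if s == 0%N then 0 else G s m) k.
rewrite big_ltn // big1 // add0r in E.
rewrite [X in _ = X]big_ltn // big_nat1 /= add0r in E.
transitivity (\sum_(1 <= s < k.+1) \sum_(0 <= m < (k - s)%N.+1)
   (if s == 0%N then 0 else G s m)).
  apply: eq_big_nat => s /andP[hs _]; apply: eq_bigr => m _.
  by rewrite ifF //; apply/negbTE; rewrite -lt0n.
rewrite E; apply: eq_big_nat => t /andP[ht _].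
rewrite big_ltn // add0r; apply: eq_big_nat => s /andP[hs _].
by rewrite ifF //; apply/negbTE; rewrite -lt0n.
Qed.

Lemma sq_split (Z : nmodType) (F : nat -> nat -> Z) k :
  \sum_(0 <= i < k.+1) \sum_(0 <= j < k.+1) F i j =
  \sum_(0 <= t < k.+1) \sum_(0 <= i < t.+1) F i (t - i)%N +
  \sum_(0 <= i < k.+1) \sum_(0 <= j < k.+1 | (k < i + j)%N) F i j.
Proof.
rewrite -tri0 -big_split /=; apply: eq_big_nat => i /andP[_ hi].
rewrite (bigID (fun j => (k < i + j)%N)) /= addrC; congr (_ + _).
rewrite (big_nat_widen 0 (k - i).+1 k.+1) ?ltnS ?leq_subr //.
apply: eq_bigl => j; lia.
Qed.

Section Poly.
Variable K : numFieldType.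

Definition Qp (p : nat -> K) M : {poly K} := \sum_(1 <= j < M.+1) p j *: 'X^j.

Lemma coefQ p M j : (Qp p M)`_j = if (0 < j <= M)%N then p j else 0.
Proof.
elim: M => [|M IH].
  by rewrite /Qp big_geq // coef0 ifF //; lia.
rewrite /Qp big_nat_recr //= -/(Qp p M) coefD IH coefZ coefXn.
case: (eqVneq j M.+1) => [->|ne] /=.
  by rewrite ltnn ltnSn mulr1n mulr1 add0r.
rewrite mulr0n mulr0 addr0; congr (if _ then _ else _); lia.
Qed.

Lemma Qpow_low (Q : {poly K}) : Q`_0 = 0 -> forall l t, (t < l)%N -> (Q ^+ l)`_t = 0.
Proof.
move=> hQ0; elim=> [//|l IH] t ht.
rewrite exprS coefM big1 // => [[a ha]] _ /=.
case: a ha => [|a] ha; first by rewrite hQ0 mul0r.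
by rewrite IH ?mulr0 //; lia.
Qed.

Lemma pow_coef_eq (p1 p2 : {poly K}) i : (forall j, (j <= i)%N -> p1`_j = p2`_j) ->
  forall l j, (j <= i)%N -> (p1 ^+ l)`_j = (p2 ^+ l)`_j.
Proof.
move=> H; elim=> [|l IH] j hj; first by rewrite !expr0.
rewrite !exprS !coefM; apply: eq_bigr => [[a ha]] _ /=.
by rewrite H ?IH //; lia.
Qed.

Definition cc (p : nat -> K) M t := \sum_(0 <= l < t.+1) (-1) ^+ l * ((Qp p M) ^+ l)`_t.

Lemma cc0 p M : cc p M 0 = 1.
Proof. by rewrite /cc big_nat1 !expr0 coef1 mul1r. Qed.

Lemma prod_monos (I : finType) (c : I -> K) (e : I -> nat) :
  \prod_i (c i *: 'X^(e i)) = (\prod_i c i) *: 'X^(\sum_i e i).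
Proof.
under eq_bigr do rewrite -mul_polyC.
by rewrite big_split /= -(rmorph_prod polyC) prodrXr mul_polyC.
Qed.

Lemma comp_eq (p : nat -> K) t l :
  \sum_(js : {ffun 'I_l -> 'I_t.+1} | [forall m, (0 < (js m : nat))%N] &&
           ((\sum_(m < l) (js m : nat))%N == t)) \prod_(m < l) p (js m)
  = ((Qp p t) ^+ l)`_t.
Proof.
have eQ : Qp p t = \sum_(j < t.+1) (if (0 < (j : nat))%N then p j *: 'X^j else 0).
  rewrite -(big_mkord xpredT (fun j => if (0 < j)%N then p j *: 'X^j else 0)).
  rewrite big_ltn // /= add0r; apply: eq_big_nat => j /andP[hj _].
  by rewrite hj.
have -> : forall x : {poly K}, x ^+ l = \prod_(m < l) x.
  by move=> x; rewrite prodr_const card_ord.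
rewrite eQ bigA_distr_bigA coef_sum [LHS]big_mkcond /=.
apply: eq_bigr => js _.
case: (boolP [forall m, (0 < (js m : nat))%N]) => hpos /=.
  rewrite (eq_bigr (fun m => p (js m) *: 'X^(js m))) => [|m _]; last first.
    by rewrite (forallP hpos).
  rewrite prod_monos coefZ coefXn eq_sym.
  by case: eqP => _; rewrite ?mulr1 ?mulr0.
move: hpos; rewrite negb_forall => /existsP [m0 hm0].
by rewrite (bigD1 m0) //= (negbTE hm0) mul0r coef0.
Qed.

Lemma ccS (p : nat -> K) M t : (0 < t <= M)%N ->
  \sum_(1 <= l < t.+1)
    \sum_(js : {ffun 'I_l -> 'I_t.+1} | [forall m, (0 < (js m : nat))%N] &&
           ((\sum_(m < l) (js m : nat))%N == t))
      (-1) ^+ l * \prod_(m < l) p (js m)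
  = cc p M t.
Proof.
move=> ht; rewrite /cc [RHS]big_ltn // expr0 mul1r expr0 coef1.
have -> : (t == 0%N) = false by lia.
rewrite mulr0n add0r; apply: eq_big_nat => l _.
rewrite -big_distrr /= comp_eq; congr (_ * _).
apply: (pow_coef_eq (i := t)) => // j hj.
by rewrite !coefQ; congr (if _ then _ else _); lia.
Qed.

Lemma ccrec (p : nat -> K) M t : (0 < t <= M)%N ->
  \sum_(0 <= j < t.+1) (if j == 0%N then 1 else p j) * cc p M (t - j) = 0.
Proof.
move=> ht; set Q := Qp p M.
have hQ0 : Q`_0 = 0 by rewrite coefQ.
have key : (1 + Q) * \sum_(l < M.+1) ((-1) *: Q) ^+ l = 1 - ((-1) *: Q) ^+ M.+1.
  rewrite -opprB subrX1 -mulNr opprB scaleN1r opprK addrC.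
  by [].
have := congr1 (fun P : {poly K} => P`_t) key.
rewrite coefB coef1 exprZn coefZ (Qpow_low hQ0) ?mulr0 ?subr0; last by lia.
have -> : (t == 0%N) = false by lia.
rewrite mulr0n.
move=> e; rewrite -[RHS]e coefM big_mkord; apply: eq_bigr => [[j hj]] _ /=.
congr (_ * _).
  rewrite coefD coef1 coefQ; case: (j =P 0%N) => [->|/eqP hj0] /=.
    by rewrite addr0.
  by rewrite add0r ifT //; lia.
rewrite coef_sum -(big_mkord xpredT (fun l => (((-1) *: Q) ^+ l)`_(t - j))).
rewrite (big_cat_nat (n := (t - j).+1)) //=; last by lia.
rewrite [X in _ = _ + X]big1_seq ?addr0; last first.
  move=> l /andP[_]; rewrite mem_index_iota => hl.
  by rewrite exprZn coefZ Qpow_low ?mulr0 //; lia.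
by apply: eq_bigr => l _; rewrite exprZn coefZ.
Qed.

End Poly.

Section Osm.
Variables (K : numFieldType) (V : lmodType K).
Implicit Types (A : pred V) (M : V -> K) (r : K -> V -> K).

Definition osm k (A : pred V) (M : V -> K) (r : K -> V -> K) :=
  forall d : K, 0 < d -> exists2 eta : K, 0 < eta &
    forall e : K, 0 < e -> e < 1 -> e < eta -> forall x, x \in A ->
      `|r e x| <= d * (e ^+ k * M x).

Lemma mineta (a b : K) : 0 < a -> 0 < b ->
  exists2 c : K, 0 < c & forall e, e < c -> e < a /\ e < b.
Proof.
move=> a0 b0; have cab : (a >=< b)%O by apply: real_comparable; apply: gtr0_real.
exists (Num.min a b); first by rewrite comparable_lt_min // a0 b0.
by move=> e; rewrite comparable_lt_min // => /andP[].
Qed.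

Lemma pos1 (C : K) : 0 <= C -> 0 < C + 1.
Proof. by move=> C0; rewrite ltr_wpDl. Qed.

Ltac nneg := repeat first [ apply: mulr_ge0 | apply: exprn_ge0 | apply: normr_ge0
  | exact: ltW | assumption | (apply: ltW; apply: pos1; assumption)
  | (match goal with H : _ |- _ => eapply H; eassumption end) ].

Lemma frac_le1 (C : K) : 0 <= C -> C / (C + 1) <= 1.
Proof. by move=> C0; rewrite ler_pdivrMr ?pos1 // mul1r lerDl. Qed.

Lemma osm_ext k A M (r1 r2 : K -> V -> K) :
  (forall e, 0 < e -> e < 1 -> forall x, x \in A -> r1 e x = r2 e x) ->
  osm k A M r1 -> osm k A M r2.
Proof.
move=> E H d d0; case: (H d d0) => eta eta0 He; exists eta => // e e0 e1 ee x hx.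
by rewrite -E //; apply: He.
Qed.

Lemma osm0 k A M : (forall x, x \in A -> 0 <= M x) -> osm k A M (fun _ _ => 0).
Proof.
move=> M0 d d0; exists 1 => // e e0 _ _ x hx.
rewrite normr0; apply: mulr_ge0; [exact: ltW | apply: mulr_ge0; [exact: exprn_ge0 (ltW e0) | exact: M0]].
Qed.

Lemma osm_add k A M (r1 r2 : K -> V -> K) : (forall x, x \in A -> 0 <= M x) ->
  osm k A M r1 -> osm k A M r2 -> osm k A M (fun e x => r1 e x + r2 e x).
Proof.
move=> M0 h1 h2 d d0; have d2 : 0 < d / 2 by rewrite divr_gt0 // ltr0n.
case: (h1 _ d2) => e1 e10 H1; case: (h2 _ d2) => e2 e20 H2.
case: (mineta e10 e20) => c c0 Hc; exists c => // e e0 e1' ec x hx.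
case: (Hc e ec) => ha hb.
apply: le_trans (ler_normD _ _) _; rewrite {1}(splitr d) mulrDl.
by apply: lerD; [exact: H1 | exact: H2].
Qed.


Lemma osm_N k A M r : osm k A M r -> osm k A M (fun e x => - r e x).
Proof.
move=> H d d0; case: (H d d0) => eta eta0 He; exists eta => // e e0 e1 ee x hx.
by rewrite normrN; apply: He.
Qed.

Lemma osm_B k A M (r1 r2 : K -> V -> K) : (forall x, x \in A -> 0 <= M x) ->
  osm k A M r1 -> osm k A M r2 -> osm k A M (fun e x => r1 e x - r2 e x).
Proof. by move=> M0 h1 h2; apply: osm_add => //; apply: osm_N. Qed.

Lemma osm_sum k A M (I : Type) (s : seq I) (P : pred I) (F : I -> K -> V -> K) :
  (forall x, x \in A -> 0 <= M x) ->
  (forall i, P i -> osm k A M (F i)) ->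
  osm k A M (fun e x => \sum_(i <- s | P i) F i e x).
Proof.
move=> M0 HF; elim: s => [|i s IH].
  by apply: osm_ext (osm0 k M0) => e _ _ x _; rewrite big_nil.
have Hi : osm k A M (fun e x => if P i then F i e x else 0).
  by case Pi: (P i); [apply: HF | apply: osm0].
apply: osm_ext (osm_add M0 Hi IH) => e _ _ x _.
by rewrite big_cons; case: ifP => _; rewrite ?add0r.
Qed.

Lemma osm_sum_seq k A M (s : seq nat) (F : nat -> K -> V -> K) :
  (forall x, x \in A -> 0 <= M x) ->
  (forall i, i \in s -> osm k A M (F i)) ->
  osm k A M (fun e x => \sum_(i <- s) F i e x).
Proof.
move=> M0; elim: s => [|i s IH] HF.
  by apply: osm_ext (osm0 k M0) => e _ _ x _; rewrite big_nil.
have Hi : osm k A M (F i) by apply: HF; rewrite inE eqxx.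
have Hs : osm k A M (fun e x => \sum_(i <- s) F i e x).
  by apply: IH => j hj; apply: HF; rewrite inE hj orbT.
by apply: osm_ext (osm_add M0 Hi Hs) => e _ _ x _; rewrite big_cons.
Qed.

Lemma osm_sum_nat k A M a b (F : nat -> K -> V -> K) :
  (forall x, x \in A -> 0 <= M x) ->
  (forall i, (a <= i < b)%N -> osm k A M (F i)) ->
  osm k A M (fun e x => \sum_(a <= i < b) F i e x).
Proof.
move=> M0 HF; apply: osm_sum_seq => // i; rewrite mem_index_iota; exact: HF.
Qed.

Lemma osm_shift k j A M r : osm k A M r ->
  osm (j + k) A M (fun e x => e ^+ j * r e x).
Proof.
move=> H d d0; case: (H d d0) => eta eta0 He; exists eta => // e e0 e1 ee x hx.
rewrite normrM (ger0_norm (exprn_ge0 j (ltW e0))).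
apply: le_trans (ler_wpM2l (exprn_ge0 j (ltW e0)) (He e e0 e1 ee x hx)) _.
by rewrite exprD le_eqVlt; apply/orP; left; apply/eqP; ring.
Qed.

Lemma osm_comp k A A' M M' r (w : V -> V) (C : K) :
  (forall x, x \in A -> 0 <= M x) -> 0 <= C ->
  (forall x, x \in A -> w x \in A') ->
  (forall x, x \in A -> M' (w x) <= C * M x) ->
  osm k A' M' r -> osm k A M (fun e x => r e (w x)).
Proof.
move=> M0 C0 wA wM H d d0.
have d' : 0 < d / (C + 1) by rewrite divr_gt0 ?pos1.
case: (H _ d') => eta eta0 He; exists eta => // e e0 e1 ee x hx.
apply: le_trans (He e e0 e1 ee _ (wA x hx)) _.
have ek : 0 <= e ^+ k by nneg.
apply: le_trans (ler_wpM2l (ltW d') (ler_wpM2l ek (wM x hx))) _.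
have -> : d / (C + 1) * (e ^+ k * (C * M x)) = (d * (e ^+ k * M x)) * (C / (C + 1)).
  by ring.
rewrite -{2}[d * _]mulr1; apply: ler_wpM2l; last exact: frac_le1.
by nneg.
Qed.

Lemma osm_bmul k A M r (s : K -> K) (C : K) :
  (forall x, x \in A -> 0 <= M x) -> 0 <= C ->
  (forall e, 0 < e -> e < 1 -> `|s e| <= C) ->
  osm k A M r -> osm k A M (fun e x => s e * r e x).
Proof.
move=> M0 C0 Hs H d d0.
have d' : 0 < d / (C + 1) by rewrite divr_gt0 ?pos1.
case: (H _ d') => eta eta0 He; exists eta => // e e0 e1 ee x hx.
rewrite normrM.
have X0 : 0 <= e ^+ k * M x by nneg.
apply: le_trans (ler_pM (normr_ge0 _) (normr_ge0 _) (Hs e e0 e1) (He e e0 e1 ee x hx)) _.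
have -> : C * (d / (C + 1) * (e ^+ k * M x)) = (d * (e ^+ k * M x)) * (C / (C + 1)).
  by ring.
rewrite -{2}[d * _]mulr1; apply: ler_wpM2l; last exact: frac_le1.
by nneg.
Qed.

Definition sosm k (s : K -> K) := osm k predT (fun _ => 1) (fun e _ => s e).

Lemma osm_mulb k A M (s : K -> K) (b : K -> V -> K) (C : K) :
  (forall x, x \in A -> 0 <= M x) -> 0 <= C ->
  (forall e, 0 < e -> e < 1 -> forall x, x \in A -> `|b e x| <= C * M x) ->
  sosm k s -> osm k A M (fun e x => s e * b e x).
Proof.
move=> M0 C0 Hb H d d0.
have d' : 0 < d / (C + 1) by rewrite divr_gt0 ?pos1.
case: (H _ d') => eta eta0 He; exists eta => // e e0 e1 ee x hx.
rewrite normrM.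
have := He e e0 e1 ee x isT; rewrite mulr1 => Hs.
apply: le_trans (ler_pM (normr_ge0 _) (normr_ge0 _) Hs (Hb e e0 e1 x hx)) _.
have -> : d / (C + 1) * e ^+ k * (C * M x) = (d * (e ^+ k * M x)) * (C / (C + 1)).
  by ring.
rewrite -{2}[d * _]mulr1; apply: ler_wpM2l; last exact: frac_le1.
by nneg.
Qed.

Lemma osm_at k A M r x0 : x0 \in A -> 0 <= M x0 ->
  osm k A M r -> sosm k (fun e => r e x0).
Proof.
move=> hx0 M0 H d d0.
have d' : 0 < d / (M x0 + 1) by rewrite divr_gt0 ?pos1.
case: (H _ d') => eta eta0 He; exists eta => // e e0 e1 ee x _.
apply: le_trans (He e e0 e1 ee x0 hx0) _.
have -> : d / (M x0 + 1) * (e ^+ k * M x0) = (d * (e ^+ k * 1)) * (M x0 / (M x0 + 1)).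
  by ring.
rewrite -{2}[d * _]mulr1; apply: ler_wpM2l; last exact: frac_le1.
by nneg.
Qed.

Lemma osm_big k A M r (C : K) : (forall x, x \in A -> 0 <= M x) -> 0 <= C ->
  (forall e, 0 < e -> e < 1 -> forall x, x \in A -> `|r e x| <= C * (e ^+ k.+1 * M x)) ->
  osm k A M r.
Proof.
move=> M0 C0 H d d0.
have eta0 : 0 < d / (C + 1) by rewrite divr_gt0 ?pos1.
exists (d / (C + 1)) => // e e0 e1 ee x hx.
apply: le_trans (H e e0 e1 x hx) _.
have X0 : 0 <= e ^+ k * M x by nneg.
have -> : C * (e ^+ k.+1 * M x) = (C * e) * (e ^+ k * M x) by rewrite exprS; ring.
apply: ler_wpM2r => //.
apply: le_trans (ler_wpM2l C0 (ltW ee)) _.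
have -> : C * (d / (C + 1)) = d * (C / (C + 1)) by ring.
by rewrite -{2}[d]mulr1; apply: ler_wpM2l; [exact: ltW | exact: frac_le1].
Qed.

Lemma osm_fun k A M r : osm k A M r -> fun_norm_to0 A M (fun e x => e ^- k * r e x).
Proof.
move=> H d d0; case: (H d d0) => eta eta0 He; exists eta => // e e0 e1 ee x hx.
have ek : 0 < e ^+ k by rewrite exprn_gt0.
have ek1 : 0 <= (e ^+ k)^-1 by rewrite invr_ge0; exact: ltW.
rewrite normrM (ger0_norm ek1).
rewrite -(ler_pM2l ek) mulrA mulfV ?gt_eqF // mul1r.
by apply: le_trans (He e e0 e1 ee x hx) _; rewrite mulrCA.
Qed.

Lemma tail_bnd k A M (a : nat -> K) (b : nat -> V -> K) (Cb : K) :
  (forall x, x \in A -> 0 <= M x) -> 0 <= Cb ->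
  (forall j x, (j <= k)%N -> x \in A -> `|b j x| <= Cb * M x) ->
  exists2 C, 0 <= C & forall e, 0 < e -> e < 1 -> forall x, x \in A ->
  `|\sum_(0 <= i < k.+1) \sum_(0 <= j < k.+1 | (k < i + j)%N)
       (a i * e ^+ i) * (b j x * e ^+ j)| <= C * (e ^+ k.+1 * M x).
Proof.
move=> M0 Cb0 Hb.
exists (\sum_(0 <= i < k.+1) \sum_(0 <= j < k.+1 | (k < i + j)%N) `|a i| * Cb).
  apply: sumr_ge0 => i _; apply: sumr_ge0 => j _; apply: mulr_ge0 => //.
move=> e e0 e1 x hx; rewrite mulr_suml.
apply: le_trans (ler_norm_sum _ _ _) _; apply: ler_sum_nat => i /andP[_ hi].
rewrite mulr_suml.
apply: le_trans (ler_norm_sum _ _ _) _.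
rewrite big_mkcond [X in _ <= X]big_mkcond; apply: ler_sum_nat => j /andP[_ hj].
case: ifP => hij //.
have ei : 0 <= e ^+ i by apply: exprn_ge0; apply: ltW.
have ej : 0 <= e ^+ j by apply: exprn_ge0; apply: ltW.
rewrite !normrM (ger0_norm ei) (ger0_norm ej).
have eij : e ^+ i * e ^+ j <= e ^+ k.+1.
  by rewrite -exprD; apply: ler_wiXn2l; [exact: ltW | exact: ltW | exact: hij].
have -> : `|a i| * e ^+ i * (`|b j x| * e ^+ j) =
   `|a i| * (`|b j x| * (e ^+ i * e ^+ j)) by ring.
have -> : `|a i| * Cb * (e ^+ k.+1 * M x) = `|a i| * ((Cb * M x) * e ^+ k.+1) by ring.
apply: (ler_wpM2l (normr_ge0 _)).
apply: ler_pM; [exact: normr_ge0 | exact: mulr_ge0 | apply: Hb => // | exact: eij].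
Qed.

Lemma poly_bnd (a : nat -> K) k : exists2 C, 0 <= C & forall e, 0 < e -> e < 1 ->
  `|\sum_(0 <= i < k.+1) a i * e ^+ i| <= C.
Proof.
exists (\sum_(0 <= i < k.+1) `|a i|); first by apply: sumr_ge0 => i _.
move=> e e0 e1; apply: le_trans (ler_norm_sum _ _ _) _.
apply: ler_sum_nat => i _; rewrite normrM -[X in _ <= X]mulr1.
apply: (ler_wpM2l (normr_ge0 _)).
rewrite normrX ger0_norm; last exact: ltW.
by apply: exprn_ile1; apply: ltW.
Qed.

Lemma sum_bnd k A M (b : nat -> V -> K) (Cb : K) :
  (forall x, x \in A -> 0 <= M x) -> 0 <= Cb ->
  (forall j x, (j <= k)%N -> x \in A -> `|b j x| <= Cb * M x) ->
  forall e, 0 < e -> e < 1 -> forall x, x \in A ->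
  `|\sum_(0 <= j < k.+1) b j x * e ^+ j| <= (Cb *+ k.+1) * M x.
Proof.
move=> M0 Cb0 Hb e e0 e1 x hx.
apply: le_trans (ler_norm_sum _ _ _) _.
apply: le_trans (ler_sum_nat (G := fun _ => Cb * M x) _) _.
  move=> j /andP[_ hj]; rewrite normrM; apply: le_trans (Hb j x _ hx) => //.
  rewrite -[X in _ <= X]mulr1; apply: (ler_wpM2l (normr_ge0 _)).
  rewrite normrX ger0_norm; last exact: ltW.
  by apply: exprn_ile1; apply: ltW.
by rewrite sumr_const_nat subn0 mulrnAl.
Qed.

End Osm.

Ltac clean := repeat match goal with H : ?T |- _ =>
  lazymatch T with
  | is_true (leq _ _) => fail
  | is_true (_ && _) => fail
  | is_true (~~ (@eq_op Datatypes_nat__canonical__eqtype_Equality _ _)) => fail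
  | is_true (@eq_op Datatypes_nat__canonical__eqtype_Equality _ _) => fail
  | ~ (@eq nat _ _) => fail
  | @eq nat _ _ => fail
  | nat => fail
  | _ => clear H
  end end.
Ltac slia := clean; lia.

Section Main.
Variables (K : numFieldType) (V : lmodType K) (n : nat)
  (B : nat -> pred V) (N : nat -> V -> K)
  (L : nat -> V -> V) (Leps : K -> V -> V)
  (lam : K) (h : V) (nu : V -> K)
  (D0 : pred V) (Rlam : V -> V)
  (lameps : K -> K)
  (nueps : K -> V -> K).
Hypotheses
 (HB0 : forall x, x \in B 0%N)
 (Hsub : forall k, (k <= n.+1)%N -> subspace (B k))
 (Hchain : forall k, (k <= n)%N -> forall x, x \in B k.+1 -> x \in B k)
 (HLlin : forall j, (j <= n)%N -> linear_on (B j) (L j))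
 (HLmap : forall j i, (j <= i)%N -> (i <= n)%N -> forall x, x \in B i -> L j x \in B (i - j)%N)
 (HLeps : forall eps, 0 < eps -> eps < 1 -> linear_on (B 0%N) (Leps eps))
 (Hlam : lam != 0) (Hh : h \in B n.+1) (Hnulin : linear_fun (B 0%N) nu)
 (HnuL : forall f, nu (L 0%N f) = lam * nu f) (HLh : L 0%N h = lam *: h) (Hnuh : nu h = 1)
 (HD0 : subspace D0) (HB1D0 : forall x, x \in B 1%N -> x \in D0)
 (HR : forall f, f \in D0 -> Rlam f \in B 0%N /\
     L 0%N (Rlam f) - lam * nu (Rlam f) *: h - lam *: Rlam f = f)
 (HRu : forall f g, f \in D0 -> g \in B 0%N ->
     L 0%N g - lam * nu g *: h - lam *: g = f -> g = Rlam f)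
 (HRB : forall i, (1 <= i <= n.+1)%N -> forall x, x \in B i -> Rlam x \in B i)
 (HIII : forall eps, 0 < eps -> eps < 1 ->
     [/\ linear_fun (B 0%N) (nueps eps),
         forall f, nueps eps (Leps eps f) = lameps eps * nueps eps f
       & nueps eps h != 0])
 (Hban : forall k, (k <= n.+1)%N -> banach (B k) (N k))
 (Hnub : bounded_fun (B 0%N) (N 0%N) nu)
 (HLb : forall j i, (j <= n)%N -> (j <= i)%N -> (i <= n.+1)%N ->
     bounded_op (B i) (N i) (B (i - j)%N) (N (i - j)%N) (L j))
 (Hkapb : exists C, forall eps, 0 < eps -> eps < 1 -> forall f, f \in B 0%N ->
     `|nueps eps f / nueps eps h| <= C * N 0%N f)
 (HR10 : bounded_op (B 1%N) (N 1%N) (B 0%N) (N 0%N) Rlam)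
 (HRj : forall j, (1 <= j <= n.+1)%N -> bounded_op (B j) (N j) (B j) (N j) Rlam)
 (Hc : forall j, (j <= n)%N ->
     op_norm_to0 (B j.+1) (N j.+1) (N 0%N)
       (fun eps f => eps ^- j *: (Leps eps f - L 0%N f
                                 - \sum_(1 <= i < j.+1) eps ^+ i *: L i f))).

Local Notation kap e f := (nueps e f / nueps e h).
Local Notation kc := (kappa_coef L nu h Rlam).
Local Notation nk := (normk N).

Lemma Bmono i j x : (j <= i)%N -> (i <= n.+1)%N -> x \in B i -> x \in B j.
Proof.
elim: i j => [|i IH] j hji hi hx; first by case: j hji.
case: (eqVneq j i.+1) => [-> //|ne].
apply: (IH j); [slia | slia | apply: Hchain => //; slia].
Qed.

Lemma Nge0 k x : (k <= n.+1)%N -> x \in B k -> 0 <= N k x.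
Proof. by move=> hk hx; case: (Hban hk) => _ hN _; apply: no_ge0 hN hx. Qed.

Lemma N0ge0 x : 0 <= N 0%N x.
Proof. exact: Nge0. Qed.

Lemma sB k : (k <= n.+1)%N -> subspace (B k).
Proof. exact: Hsub. Qed.

Lemma noB k : (k <= n.+1)%N -> norm_on (B k) (N k).
Proof. by move=> hk; case: (Hban hk). Qed.

Lemma sB0 : subspace (B 0%N).
Proof. exact: Hsub. Qed.

Lemma bmax_seq (F : nat -> K) (s : seq nat) :
  (forall i, i \in s -> 0 <= F i) ->
  [/\ 0 <= \big[Num.max/0]_(i <- s) F i,
      forall i, i \in s -> F i <= \big[Num.max/0]_(i <- s) F i
    & forall c, 0 <= c -> (forall i, i \in s -> F i <= c) ->
        \big[Num.max/0]_(i <- s) F i <= c].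
Proof.
elim: s => [|a s IH] HF.
  by rewrite big_nil; split.
have HF' : forall i, i \in s -> 0 <= F i.
  by move=> i hi; apply: HF; rewrite inE hi orbT.
have [IH1 IH2 IH3] := IH HF'.
have Fa : 0 <= F a by apply: HF; rewrite inE eqxx.
rewrite big_cons.
have cmp : (F a >=< \big[Num.max/0]_(i <- s) F i)%O.
  by apply: real_comparable; apply: ger0_real.
split.
- by rewrite comparable_le_max // Fa.
- move=> i; rewrite inE comparable_le_max // => /orP[/eqP->|hi].
    by rewrite lexx.
  by rewrite IH2 // orbT.
- move=> c c0 Hc'; rewrite comparable_ge_max // Hc' ?inE ?eqxx //=.
  by apply: IH3 => // i hi; apply: Hc'; rewrite inE hi orbT.
Qed.

Lemma bmax_props (F : nat -> K) k :
  (forall i, (0 < i <= k)%N -> 0 <= F i) ->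
  [/\ 0 <= \big[Num.max/0]_(1 <= i < k.+1) F i,
      forall i, (0 < i <= k)%N -> F i <= \big[Num.max/0]_(1 <= i < k.+1) F i
    & forall c, 0 <= c -> (forall i, (0 < i <= k)%N -> F i <= c) ->
        \big[Num.max/0]_(1 <= i < k.+1) F i <= c].
Proof.
move=> HF.
have HF' : forall i, i \in index_iota 1 k.+1 -> 0 <= F i.
  by move=> i; rewrite mem_index_iota; exact: HF.
have [H1 H2 H3] := bmax_seq HF'.
split => //.
- by move=> i hi; apply: H2; rewrite mem_index_iota.
- move=> c c0 Hc'; apply: H3 => // i; rewrite mem_index_iota => hi; exact: Hc'.
Qed.

Lemma nk0 x : nk 0 x = N 0%N x.
Proof. by []. Qed.

Lemma nkS k x : (0 < k)%N -> nk k x = \big[Num.max/0]_(1 <= i < k.+1) N i x.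
Proof. by case: k. Qed.

Lemma nk_ge0 k x : (k <= n.+1)%N -> x \in B k -> 0 <= nk k x.
Proof.
move=> hk hx; case: k hk hx => [|k] hk hx; first exact: N0ge0.
rewrite nkS //.
have HF : forall i, (0 < i <= k.+1)%N -> 0 <= N i x.
  move=> i hi; apply: Nge0; [slia | apply: (Bmono (i := k.+1)) => //; slia].
by case: (bmax_props HF).
Qed.

Lemma nk_ge k x i : (k <= n.+1)%N -> x \in B k -> (0 < i <= k)%N -> N i x <= nk k x.
Proof.
move=> hk hx hi; case: k hk hx hi => [|k] hk hx hi; first by slia.
rewrite nkS //.
have HF : forall i, (0 < i <= k.+1)%N -> 0 <= N i x.
  move=> j hj; apply: Nge0; [slia | apply: (Bmono (i := k.+1)) => //; slia].
by case: (bmax_props HF) => _ H _; apply: H.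
Qed.

Lemma nk_le k x c : (k <= n.+1)%N -> x \in B k -> 0 <= c ->
  (k = 0%N -> N 0%N x <= c) -> (forall i, (0 < i <= k)%N -> N i x <= c) -> nk k x <= c.
Proof.
move=> hk hx c0 H0 H; case: k hk hx H0 H => [|k] hk hx H0 H; first exact: H0.
rewrite nkS //.
have HF : forall i, (0 < i <= k.+1)%N -> 0 <= N i x.
  move=> j hj; apply: Nge0; [slia | apply: (Bmono (i := k.+1)) => //; slia].
by case: (bmax_props HF) => _ _ H3; apply: H3.
Qed.

Lemma nk_mono j k x : (0 < j <= k)%N -> (k <= n.+1)%N -> x \in B k -> nk j x <= nk k x.
Proof.
move=> hj hk hx; apply: nk_le; [slia | apply: (Bmono (i := k)) => //; slia |
  exact: nk_ge0 | slia | ].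
move=> i hi; apply: nk_ge => //; slia.
Qed.


Section KapFacts.
Variable e : K.
Hypotheses (e0 : 0 < e) (e1 : e < 1).

Lemma nueps_lin : linear_fun (B 0%N) (nueps e).
Proof. by case: (HIII e0 e1). Qed.
Lemma nuepsh : nueps e h != 0.
Proof. by case: (HIII e0 e1). Qed.

Lemma kapD x y : kap e (x + y) = kap e x + kap e y.
Proof. by rewrite (lfD sB0 nueps_lin) ?HB0 // mulrDl. Qed.
Lemma kapZ a x : kap e (a *: x) = a * kap e x.
Proof. by rewrite (lfZ _ sB0 nueps_lin) ?HB0 // mulrA. Qed.
Lemma kapB x y : kap e (x - y) = kap e x - kap e y.
Proof. by rewrite (lfB sB0 nueps_lin) ?HB0 // mulrBl. Qed.
Lemma kap_sum (I : Type) (r : seq I) (P : pred I) (F : I -> V) :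
  kap e (\sum_(i <- r | P i) F i) = \sum_(i <- r | P i) kap e (F i).
Proof. by rewrite (@lf_sum K V (B 0%N) (nueps e) I r P F sB0 nueps_lin) ?mulr_suml // => i _; apply: HB0. Qed.
Lemma kap_h : kap e h = 1.
Proof. by rewrite mulfV // nuepsh. Qed.
Lemma kap_Leps u : kap e (Leps e u) = lameps e * kap e u.
Proof. by case: (HIII e0 e1) => _ -> _; rewrite mulrA. Qed.

End KapFacts.

Lemma nuD x y : nu (x + y) = nu x + nu y.
Proof. by rewrite (lfD sB0 Hnulin) ?HB0. Qed.
Lemma nuZ a x : nu (a *: x) = a * nu x.
Proof. by rewrite (lfZ _ sB0 Hnulin) ?HB0. Qed.
Lemma nuB x y : nu (x - y) = nu x - nu y.
Proof. by rewrite (lfB sB0 Hnulin) ?HB0. Qed.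

Lemma L0lin : linear_on (B 0%N) (L 0%N).
Proof. exact: HLlin. Qed.

Lemma Rlin a x y : x \in D0 -> y \in D0 -> Rlam (a *: x + y) = a *: Rlam x + Rlam y.
Proof.
move=> hx hy; symmetry; apply: HRu; [by rewrite subD ?subZ | exact: HB0 | ].
rewrite (loD sB0 L0lin) ?HB0 // (loZ _ sB0 L0lin) ?HB0 // nuD nuZ.
have -> : lam * (a * nu (Rlam x) + nu (Rlam y)) *: h =
   a *: ((lam * nu (Rlam x)) *: h) + (lam * nu (Rlam y)) *: h.
  by rewrite scalerA -scalerDl; congr (_ *: _); ring.
have -> : lam *: (a *: Rlam x + Rlam y) = a *: (lam *: Rlam x) + lam *: Rlam y.
  by rewrite scalerDr !scalerA mulrC.
by rewrite lin3 (HR hx).2 (HR hy).2.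
Qed.

Lemma RlinD x y : x \in D0 -> y \in D0 -> Rlam (x + y) = Rlam x + Rlam y.
Proof. by move=> hx hy; have := Rlin 1 hx hy; rewrite !scale1r. Qed.
Lemma RlinZ a x : x \in D0 -> Rlam (a *: x) = a *: Rlam x.
Proof.
move=> hx; have := Rlin a hx (sub0 HD0); rewrite !addr0 => ->.
have := Rlin 1 (sub0 HD0) (sub0 HD0); rewrite !scale1r addr0 => e.
by rewrite [Rlam 0](_ : _ = 0) ?addr0 // -[RHS](subrr (Rlam 0)) {2}e addrK.
Qed.

Lemma nuR f : f \in D0 -> nu f = - (lam * nu (Rlam f)).
Proof.
move=> hf; rewrite -{1}(HR hf).2 !nuB !nuZ HnuL Hnuh; ring.
Qed.

Lemma ID1 e f : 0 < e -> e < 1 -> f \in D0 ->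
  kap e f - nu f = (lameps e - lam) * kap e (Rlam f)
                   - kap e (Leps e (Rlam f) - L 0%N (Rlam f)).
Proof.
move=> e0 e1 hf; rewrite (nuR hf).
rewrite -{1}(HR hf).2 !(kapB e0 e1) !(kapZ e0 e1) (kap_h e0 e1) (kap_Leps e0 e1).
ring.
Qed.

Lemma ID2 e : 0 < e -> e < 1 -> lameps e - lam = kap e (Leps e h - L 0%N h).
Proof.
move=> e0 e1; rewrite (kapB e0 e1) (kap_Leps e0 e1) HLh (kapZ e0 e1) (kap_h e0 e1).
ring.
Qed.

Local Notation Tk e k u := (e ^- k *: (Leps e u - L 0%N u
                                 - \sum_(1 <= i < k.+1) e ^+ i *: L i u)).

Lemma ID3 e k u : 0 < e -> e < 1 ->
  kap e (Leps e u - L 0%N u) =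
  \sum_(1 <= i < k.+1) e ^+ i * kap e (L i u) + e ^+ k * kap e (Tk e k u).
Proof.
move=> e0 e1.
have ek : e ^+ k != 0 by rewrite expf_neq0 // gt_eqF.
rewrite -(kapZ e0 e1) scalerA mulfV // scale1r.
under eq_bigr do rewrite -(kapZ e0 e1).
rewrite -(kap_sum e0 e1).
by rewrite -(kapD e0 e1) [in RHS]addrC subrK.
Qed.

Lemma Ckap : exists2 C, 0 <= C & forall e, 0 < e -> e < 1 -> forall f,
  `|kap e f| <= C * N 0%N f.
Proof.
case: Hkapb => C HC; exists `|C| => // e e0 e1 f.
apply: (@pos_const K V (fun _ => True) (fun f => `|kap e f|) (N 0%N) C); last by [].
- by move=> *; exact: normr_ge0.
- by move=> *; exact: N0ge0.
- by move=> f' _; apply: HC => //; exact: HB0.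
Qed.

Lemma Cnu : exists2 C, 0 <= C & forall f, `|nu f| <= C * N 0%N f.
Proof.
case: Hnub => C HC; exists `|C| => // f.
apply: (@pos_const K V (fun _ => True) (fun f => `|nu f|) (N 0%N) C); last by [].
- by move=> *; exact: normr_ge0.
- by move=> *; exact: N0ge0.
- by move=> f' _; apply: HC => //; exact: HB0.
Qed.

Lemma CR10 : exists2 C, 0 <= C & forall x, x \in B 1%N -> N 0%N (Rlam x) <= C * N 1%N x.
Proof.
case: HR10 => _ [C HC]; exists `|C| => //.
apply: (@pos_const K V (fun x => x \in B 1%N) (fun x => N 0%N (Rlam x)) (N 1%N) C).
- by move=> x _; exact: N0ge0.
- by move=> x hx; apply: Nge0.
- exact: HC.
Qed.

Lemma CRj j : (1 <= j <= n.+1)%N -> exists2 C, 0 <= C &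
  forall x, x \in B j -> N j (Rlam x) <= C * N j x.
Proof.
move=> hj; case: (HRj hj) => Hm [C HC]; exists `|C| => //.
apply: (@pos_const K V (fun x => x \in B j) (fun x => N j (Rlam x)) (N j) C).
- by move=> x hx; apply: Nge0; [slia | exact: Hm].
- by move=> x hx; apply: Nge0; [slia | exact: hx].
- exact: HC.
Qed.

Lemma CL j i : (j <= n)%N -> (j <= i)%N -> (i <= n.+1)%N -> exists2 C, 0 <= C &
  forall x, x \in B i -> N (i - j)%N (L j x) <= C * N i x.
Proof.
move=> h1 h2 h3; case: (HLb h1 h2 h3) => Hm [C HC]; exists `|C| => //.
apply: (@pos_const K V (fun x => x \in B i) (fun x => N (i - j)%N (L j x)) (N i) C).
- by move=> x hx; apply: Nge0; [slia | exact: Hm].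
- by move=> x hx; apply: Nge0.
- exact: HC.
Qed.


Lemma Np_le_nk k y p : (k <= n.+1)%N -> y \in B k -> (p <= k)%N ->
  (p = 0%N -> k = 0%N) -> N p y <= nk k y.
Proof.
move=> hk hy hp H; case: p hp H => [|p] hp H.
  by rewrite (H erefl) nk0.
by apply: nk_ge => //; slia.
Qed.

Lemma nkmul_mono m x (C C' : K) : (m <= n.+1)%N -> x \in B m -> C <= C' ->
  C * nk m x <= C' * nk m x.
Proof. by move=> hm hx hC; apply: ler_wpM2r => //; apply: nk_ge0. Qed.

Lemma bndR m : (0 < m <= n.+1)%N -> exists2 C, 0 <= C &
  forall p, (p <= m)%N -> forall x, x \in B m -> N p (Rlam x) <= C * nk m x.
Proof.
move=> hm.
have := @fin_const K (fun p C => forall x, x \in B m -> N p (Rlam x) <= C * nk m x) m.+1.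
case => [p C C' H hC x hx|p hp|C C0 H]; last by exists C => // p hp; apply: H.
  by apply: le_trans (H x hx) _; apply: nkmul_mono => //; slia.
case: p hp => [|p] hp.
  case: CR10 => C C0 HC; exists C => // x hx.
  have hx1 : x \in B 1%N by apply: (Bmono (i := m)) => //; slia.
  apply: le_trans (HC x hx1) _; apply: ler_wpM2l => //.
  by apply: nk_ge => //; slia.
have [C C0 HC] := @CRj p.+1 ltac:(slia).
exists C => // x hx.
have hxp : x \in B p.+1 by apply: (Bmono (i := m)) => //; slia.
apply: le_trans (HC x hxp) _; apply: ler_wpM2l => //.
by apply: nk_ge => //; slia.
Qed.

Lemma RBm m x : (0 < m <= n.+1)%N -> x \in B m -> Rlam x \in B m.
Proof. by move=> hm hx; apply: HRB => //. Qed.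

Lemma nkR m : (0 < m <= n.+1)%N -> exists2 C, 0 <= C &
  forall x, x \in B m -> nk m (Rlam x) <= C * nk m x.
Proof.
move=> hm; case: (bndR hm) => C C0 HC; exists C => // x hx.
apply: nk_le; [slia | exact: RBm | by rewrite mulr_ge0 // nk_ge0 //; slia | | ].
- by move=> m0; slia.
- by move=> p hp; apply: HC => //; slia.
Qed.

Lemma LBm m s x : (s <= n)%N -> (s <= m)%N -> (m <= n.+1)%N -> x \in B m ->
  L s x \in B (m - s)%N.
Proof. by move=> h1 h2 h3 hx; case: (HLb h1 h2 h3) => H _; apply: H. Qed.

Lemma bndL m s : (0 < s <= n)%N -> (s <= m <= n.+1)%N -> exists2 C, 0 <= C &
  forall p, (p <= m - s)%N -> forall x, x \in B m -> N p (L s x) <= C * nk m x.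
Proof.
move=> hs hm.
have := @fin_const K (fun p C => forall x, x \in B m -> N p (L s x) <= C * nk m x) (m - s).+1.
case => [p C C' H hC x hx|p hp|C C0 H]; last by exists C => // p hp; apply: H.
  by apply: le_trans (H x hx) _; apply: nkmul_mono => //; slia.
have [C C0 HC] := @CL s (p + s) ltac:(slia) ltac:(slia) ltac:(slia).
exists C => // x hx.
have hxp : x \in B (p + s)%N by apply: (Bmono (i := m)) => //; slia.
have := HC x hxp; rewrite addnK => H1; apply: le_trans H1 _.
apply: ler_wpM2l => //; apply: nk_ge => //; slia.
Qed.

Lemma nkL m s : (0 < s <= n)%N -> (s <= m <= n.+1)%N -> exists2 C, 0 <= C &
  forall x, x \in B m -> nk (m - s) (L s x) <= C * nk m x.
Proof.
move=> hs hm; case: (bndL hs hm) => C C0 HC; exists C => // x hx.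
apply: nk_le; [slia | apply: LBm => //; slia | by rewrite mulr_ge0 // nk_ge0 //; slia | | ].
- by move=> _; exact: (HC 0%N (leq0n _) x hx).
- by move=> p hp; apply: HC => //; slia.
Qed.

Lemma wBm m s (a : K) x : (0 < s <= n)%N -> (s <= m <= n.+1)%N -> x \in B m ->
  a *: Rlam x - L s (Rlam x) \in B (m - s)%N.
Proof.
move=> hs hm hx; have hR : Rlam x \in B m by apply: RBm => //; slia.
apply: subB; [apply: sB; slia | | apply: LBm => //; slia].
by apply: subZ; [apply: sB; slia | apply: (Bmono (i := m)) => //; slia].
Qed.

Lemma nkw m s (a : K) : (0 < s <= n)%N -> (s <= m <= n.+1)%N -> exists2 C, 0 <= C &
  forall x, x \in B m -> nk (m - s) (a *: Rlam x - L s (Rlam x)) <= C * nk m x.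
Proof.
move=> hs hm.
have hm1 : (0 < m <= n.+1)%N by slia.
case: (bndR hm1) => C1 C10 H1; case: (nkR hm1) => C2 C20 H2.
case: (bndL hs hm) => C3 C30 H3.
exists (`|a| * C1 + C3 * C2); first by rewrite addr_ge0 // mulr_ge0.
move=> x hx; have hR : Rlam x \in B m by apply: RBm.
have Hp : forall p, (p <= m - s)%N ->
    N p (a *: Rlam x - L s (Rlam x)) <= (`|a| * C1 + C3 * C2) * nk m x.
  move=> p hp.
  have hRp : Rlam x \in B p by apply: (Bmono (i := m)) => //; slia.
  have hLp : L s (Rlam x) \in B p.
    by apply: (Bmono (i := (m - s)%N)); [slia | slia | apply: LBm => //; slia].
  apply: le_trans (noZB _ (sB _) (noB _) hRp hLp) _; try slia.
  rewrite mulrDl -mulrA; apply: lerD.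
    by apply: ler_wpM2l => //; apply: H1 => //; slia.
  rewrite -mulrA; apply: le_trans (H3 p hp _ hR) _.
  by apply: ler_wpM2l => //; apply: H2.
apply: nk_le; [slia | exact: wBm | | | ].
- apply: mulr_ge0; [apply: addr_ge0; apply: mulr_ge0; rewrite ?normr_ge0 // | apply: nk_ge0 => //; slia].
- by move=> _; apply: Hp.
- by move=> p hp; apply: Hp; slia.
Qed.

Lemma kapT_st m i : (i <= m)%N -> kapT L nu h Rlam m i = kc i.
Proof.
elim: m i => [|m IH] i hi; first by case: i hi.
case: (eqVneq i m.+1) => [->//|ne].
have him : (i <= m)%N by slia.
by rewrite [kapT _ _ _ _ m.+1 i]/= him IH.
Qed.

Lemma lamT_st m j : (j <= m.+1)%N -> lamT L h (kapT L nu h Rlam m) j = lamT L h kc j.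
Proof. by move=> hj; rewrite /lamT; apply: eq_big_nat => i hi; rewrite kapT_st //; slia. Qed.

Lemma kc_rec t f : (0 < t)%N -> kc t f =
  \sum_(1 <= s < t.+1) kc (t - s)%N (lamT L h kc s *: Rlam f - L s (Rlam f)).
Proof.
case: t => [//|m] _; rewrite /kappa_coef [kapT _ _ _ _ m.+1]/=; cbv beta; rewrite ltnn.
by apply: eq_big_nat => s hs; rewrite kapT_st ?lamT_st //; slia.
Qed.

Lemma concl1 k : (k <= n)%N -> linear_fun (B k) (kc k) /\
  exists2 C, 0 <= C & forall x, x \in B k -> `|kc k x| <= C * nk k x.
Proof.
elim/ltn_ind: k => k IH hk.
case: k IH hk => [|k] IH hk.
  split; first exact: Hnulin.
  by case: Cnu => C C0 HC; exists C => // x _; exact: HC.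
set w := fun s x => lamT L h kc s *: Rlam x - L s (Rlam x).
have wB : forall s x, (0 < s <= k.+1)%N -> x \in B k.+1 -> w s x \in B (k.+1 - s)%N.
  by move=> s x hs hx; apply: wBm => //; slia.
split.
  move=> a x y hx hy; rewrite !kc_rec //.
  have hx1 : x \in D0 by apply: HB1D0; apply: (Bmono (i := k.+1)) => //; slia.
  have hy1 : y \in D0 by apply: HB1D0; apply: (Bmono (i := k.+1)) => //; slia.
  have Hw : forall s, (0 < s <= k.+1)%N -> w s (a *: x + y) = a *: w s x + w s y.
    move=> s hs; rewrite /w Rlin //.
    have hRx : Rlam x \in B s by apply: (Bmono (i := k.+1)); [slia|slia|apply: RBm => //; slia].
    have hRy : Rlam y \in B s by apply: (Bmono (i := k.+1)); [slia|slia|apply: RBm => //; slia].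
    have sBs : subspace (B s) by apply: sB; slia.
    rewrite (loD sBs (HLlin _)) ?subZ // ?(loZ _ sBs (HLlin _)) //; try slia.
    by rewrite scalerDr !scalerA mulrC -lin2 -scalerA.
  rewrite mulr_sumr -big_split /=; apply: eq_big_nat => s hs.
  have [Hl _] := IH (k.+1 - s)%N ltac:(slia) ltac:(slia).
  have sBs : subspace (B (k.+1 - s)%N) by apply: sB; slia.
  transitivity (kc (k.+1 - s) (a *: w s x + w s y)); first by rewrite -Hw.
  by rewrite (lfD sBs Hl) ?(lfZ _ sBs Hl) ?subZ ?wB.
have := @fin_const K (fun s C => (0 < s)%N -> forall x, x \in B k.+1 ->
   `|kc (k.+1 - s)%N (w s x)| <= C * nk k.+1 x) k.+2.
case => [s C C' H hC hs x hx|s hs|C C0 H].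
- by apply: le_trans (H hs x hx) _; apply: nkmul_mono => //; slia.
- case: s hs => [|s] hs; first by exists 0.
  have [_ [C1 C10 H1]] := IH (k.+1 - s.+1)%N ltac:(slia) ltac:(slia).
  have [C2 C20 H2] := @nkw k.+1 s.+1 (lamT L h kc s.+1) ltac:(slia) ltac:(slia).
  exists (C1 * C2); first by rewrite mulr_ge0.
  move=> _ x hx; apply: le_trans (H1 _ (wB _ _ _ hx)) _; first by slia.
  by rewrite -mulrA; apply: ler_wpM2l => //; apply: H2.
exists (C *+ k.+1); first by rewrite mulrn_wge0.
move=> x hx; rewrite kc_rec //.
apply: le_trans (ler_norm_sum _ _ _) _.
apply: le_trans (ler_sum_nat (G := fun _ => C * nk k.+1 x) _) _.
  by move=> s hs; apply: H => //; slia.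
by rewrite sumr_const_nat subn1 /= mulrnAl.
Qed.

Local Notation res m e u :=
  (kap e u - nu u - \sum_(1 <= i < m.+1) kc i u * e ^+ i).

Lemma res_eq m e u : res m e u = kap e u - \sum_(0 <= i < m.+1) kc i u * e ^+ i.
Proof. by rewrite [in RHS]big_ltn // expr0 mulr1 opprD addrA. Qed.

Lemma nkM0 k : (k <= n.+1)%N -> forall x, x \in B k -> 0 <= nk k x.
Proof. by move=> hk x hx; apply: nk_ge0. Qed.

Lemma osm_T k : (k <= n)%N ->
  osm k (B k.+1) (nk k.+1) (fun e u => e ^+ k * kap e (Tk e k u)).
Proof.
move=> hk d d0; case: Ckap => C0 C00 HC0.
have d' : 0 < d / (C0 + 1) by rewrite divr_gt0 ?pos1.
case: (Hc hk d') => eta eta0 He; exists eta => // e e0 e1 ee u hu.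
have ek : 0 <= e ^+ k by apply: exprn_ge0; apply: ltW.
rewrite normrM (ger0_norm ek).
have H1 := He e e0 e1 ee u hu; cbv beta in H1.
have hnk : N k.+1 u <= nk k.+1 u by apply: nk_ge => //; slia.
have Nk0 : 0 <= N k.+1 u by apply: Nge0.
rewrite mulrCA; apply: ler_wpM2l => //.
apply: le_trans (HC0 e e0 e1 _) _.
apply: le_trans (ler_wpM2l C00 H1) _.
apply: le_trans (ler_wpM2l C00 (ler_wpM2l (ltW d') hnk)) _.
have -> : C0 * (d / (C0 + 1) * nk k.+1 u) = (d * nk k.+1 u) * (C0 / (C0 + 1)) by ring.
rewrite -{2}[d * _]mulr1; apply: ler_wpM2l; last exact: frac_le1.
by apply: mulr_ge0; [exact: ltW | apply: nk_ge0 => //; slia].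
Qed.

Lemma Phi_id k e u : 0 < e -> e < 1 ->
  kap e (Leps e u - L 0%N u) - \sum_(1 <= s < k.+1) lamT L u kc s * e ^+ s =
  \sum_(1 <= i < k.+1) e ^+ i * res (k - i)%N e (L i u) + e ^+ k * kap e (Tk e k u).
Proof.
move=> e0 e1; rewrite (ID3 k u e0 e1).
have E : \sum_(1 <= i < k.+1) e ^+ i * kap e (L i u) =
   \sum_(1 <= i < k.+1) e ^+ i * res (k - i)%N e (L i u) +
   \sum_(1 <= s < k.+1) lamT L u kc s * e ^+ s.
  rewrite (eq_big_nat _ _ (F2 := fun i => e ^+ i * res (k - i)%N e (L i u) +
     \sum_(0 <= m < (k - i)%N.+1) e ^+ i * (kc m (L i u) * e ^+ m))); last first.
    by move=> i _; rewrite res_eq -mulr_sumr -mulrDr subrK.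
  rewrite big_split /=; congr (_ + _).
  rewrite (tri1 (fun i m => e ^+ i * (kc m (L i u) * e ^+ m))).
  apply: eq_big_nat => t /andP[ht _]; rewrite /lamT mulr_suml.
  apply: eq_big_nat => i /andP[hi hit].
  by rewrite mulrCA -exprD subnKC //; slia.
rewrite E; ring.
Qed.

Lemma Phi_osm k : (k <= n)%N -> (forall m, (m < k)%N ->
    osm m (B m.+1) (nk m.+1) (fun e u => res m e u)) ->
  osm k (B k.+1) (nk k.+1) (fun e u =>
    kap e (Leps e u - L 0%N u) - \sum_(1 <= s < k.+1) lamT L u kc s * e ^+ s).
Proof.
move=> hk IH.
have M0 := @nkM0 k.+1 ltac:(slia).
apply: osm_ext (osm_add M0 _ (osm_T hk)); first by move=> e e0 e1 u _; rewrite Phi_id.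
apply: osm_sum_nat => // i /andP[hi hik].
have [C C0 HC] := @nkL k.+1 i ltac:(slia) ltac:(slia).
have e1 : (k.+1 - i)%N = (k - i).+1 by slia.
rewrite e1 in HC.
have hLB : forall x, x \in B k.+1 -> L i x \in B (k - i).+1.
  by move=> x hx; rewrite -e1; apply: LBm => //; slia.
have H := osm_comp M0 C0 hLB HC (IH (k - i)%N ltac:(slia)).
by have := osm_shift i H; rewrite subnKC //; slia.
Qed.

Lemma main_id k e f : (k <= n)%N -> 0 < e -> e < 1 -> f \in B k.+1 ->
  res k e f =
  \sum_(1 <= s < k.+1) e ^+ s * res (k - s)%N e (lamT L h kc s *: Rlam f - L s (Rlam f))
  + (kap e (Leps e h - L 0%N h) - \sum_(1 <= s < k.+1) lamT L h kc s * e ^+ s)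
      * kap e (Rlam f)
  - e ^+ k * kap e (Tk e k (Rlam f)).
Proof.
move=> hk e0 e1 hf.
have hfD : f \in D0 by apply: HB1D0; apply: (Bmono (i := k.+1)) => //; slia.
have E1 := ID1 e0 e1 hfD.
rewrite (ID2 e0 e1) (ID3 k (Rlam f) e0 e1) in E1.
have E2 : \sum_(1 <= s < k.+1) e ^+ s *
      res (k - s)%N e (lamT L h kc s *: Rlam f - L s (Rlam f)) =
    \sum_(1 <= s < k.+1) e ^+ s * kap e (lamT L h kc s *: Rlam f - L s (Rlam f))
    - \sum_(1 <= t < k.+1) kc t f * e ^+ t.
  under eq_bigr do rewrite res_eq mulrBr mulr_sumr.
  rewrite sumrB; congr (_ - _).
  rewrite (tri1 (fun s m => e ^+ s * (kc m (lamT L h kc s *: Rlam f - L s (Rlam f)) * e ^+ m))).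
  apply: eq_big_nat => t /andP[ht _]; rewrite (kc_rec _ ht) mulr_suml.
  apply: eq_big_nat => s /andP[hs hst].
  by rewrite mulrCA -exprD subnKC //; slia.
have E3 : \sum_(1 <= s < k.+1) e ^+ s * kap e (lamT L h kc s *: Rlam f - L s (Rlam f)) =
    (\sum_(1 <= s < k.+1) lamT L h kc s * e ^+ s) * kap e (Rlam f)
    - \sum_(1 <= i < k.+1) e ^+ i * kap e (L i (Rlam f)).
  under eq_bigr do rewrite (kapB e0 e1) (kapZ e0 e1) mulrBr.
  rewrite sumrB mulr_suml; congr (_ - _).
  by apply: eq_bigr => s _; rewrite mulrCA mulrA.
rewrite E2 E3 E1; ring.
Qed.

Lemma concl2 k : (k <= n)%N -> osm k (B k.+1) (nk k.+1) (fun e u => res k e u).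
Proof.
elim/ltn_ind: k => k IH hk.
have IH' : forall m, (m < k)%N -> osm m (B m.+1) (nk m.+1) (fun e u => res m e u).
  by move=> m hm; apply: IH => //; slia.
have M0 := @nkM0 k.+1 ltac:(slia).
apply: osm_ext; first by move=> e e0 e1 f hf; rewrite (main_id hk e0 e1 hf).
apply: osm_B => //; first apply: osm_add => //.
- apply: osm_sum_nat => // s /andP[hs hsk].
  have [C C0 HC] := @nkw k.+1 s (lamT L h kc s) ltac:(slia) ltac:(slia).
  have e1 : (k.+1 - s)%N = (k - s).+1 by slia.
  rewrite e1 in HC.
  have hwB : forall x, x \in B k.+1 ->
      lamT L h kc s *: Rlam x - L s (Rlam x) \in B (k - s).+1.
    by move=> x hx; rewrite -e1; apply: wBm => //; slia.
  have H := osm_comp M0 C0 hwB HC (IH' (k - s)%N ltac:(slia)).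
  by have := osm_shift s H; rewrite subnKC //; slia.
- have hhk : h \in B k.+1 by apply: (Bmono (i := n.+1)) => //; slia.
  have Hs := osm_at hhk (M0 h hhk) (Phi_osm hk IH').
  case: Ckap => C1 C10 H1.
  have hm1 : (0 < k.+1 <= n.+1)%N by slia.
  case: (bndR hm1) => C2 C20 H2.
  apply: (osm_mulb (C := C1 * C2)) => //; first by rewrite mulr_ge0.
  move=> e e0 e1 x hx; apply: le_trans (H1 e e0 e1 _) _.
  by rewrite -mulrA; apply: ler_wpM2l => //; apply: H2.
- have hm1 : (0 < k.+1 <= n.+1)%N by slia.
  case: (nkR hm1) => C C0 HC.
  exact: (osm_comp M0 C0 (fun x hx => RBm hm1 hx) HC (osm_T hk)).
Qed.

Lemma comp_coef_eq one i : (0 < i <= n)%N ->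
  comp_coef L nu h Rlam one i = cc (fun j => kc j one) n i.
Proof. by move=> hi; rewrite -(@ccS _ (fun j => kc j one) n i hi). Qed.

Lemma nu_coef_eq one k f : (k <= n)%N -> nu_coef L nu h Rlam one k f =
  \sum_(0 <= i < k.+1) cc (fun j => kc j one) n i * kc (k - i)%N f.
Proof.
move=> hk; rewrite /nu_coef [RHS]big_ltn // cc0 mul1r subn0; congr (_ + _).
by apply: eq_big_nat => i hi; rewrite comp_coef_eq //; slia.
Qed.

Lemma kc_bnd j m : (j <= n)%N -> (j <= m <= n.+1)%N -> exists2 C, 0 <= C &
  forall f, f \in B m -> `|kc j f| <= C * nk m f.
Proof.
move=> hj hm; case: j hj hm => [|j] hj hm.
  case: m hm => [|m] hm.
    by case: Cnu => C C0 HC; exists C => // f _; exact: HC.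
  case: Cnu => C C0 HC.
  have hm1 : (0 < m.+1 <= n.+1)%N by slia.
  case: (bndR hm1) => C1 C10 H1.
  exists (`|lam| * C * C1); first by rewrite !mulr_ge0.
  move=> f hf.
  have hfD : f \in D0 by apply: HB1D0; apply: (Bmono (i := m.+1)) => //; slia.
  rewrite [kc 0%N f](nuR hfD) normrN normrM -!mulrA.
  apply: (ler_wpM2l (normr_ge0 _)); apply: le_trans (HC _) _.
  by apply: ler_wpM2l => //; apply: H1.
have [_ [C C0 HC]] := concl1 hj.
exists C => // f hf; apply: le_trans (HC f _) _.
  by apply: (Bmono (i := m)) => //; slia.
apply: ler_wpM2l => //; apply: nk_mono => //; slia.
Qed.

Lemma concl3a one k : (k <= n)%N ->
  linear_fun (B k) (nu_coef L nu h Rlam one k) /\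
  bounded_fun (B k) (nk k) (nu_coef L nu h Rlam one k).
Proof.
move=> hk; split.
  move=> a x y hx hy; rewrite !nu_coef_eq // mulr_sumr -big_split /=.
  apply: eq_big_nat => i /andP[_ hi].
  have [Hl _] := concl1 (k := (k - i)%N) ltac:(slia).
  have sBs : subspace (B (k - i)%N) by apply: sB; slia.
  have hx' : x \in B (k - i)%N by apply: (Bmono (i := k)) => //; slia.
  have hy' : y \in B (k - i)%N by apply: (Bmono (i := k)) => //; slia.
  rewrite (lfD sBs Hl) ?(lfZ _ sBs Hl) ?subZ //; ring.
have := @fin_const K (fun i C => forall f, f \in B k ->
   `|cc (fun j => kc j one) n i * kc (k - i)%N f| <= C * nk k f) k.+1.
case => [i C C' H hC f hf|i hi|C C0 H].
- by apply: le_trans (H f hf) _; apply: nkmul_mono => //; slia.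
- have [C1 C10 H1] := @kc_bnd (k - i)%N k ltac:(slia) ltac:(slia).
  exists (`|cc (fun j => kc j one) n i| * C1); first by rewrite mulr_ge0.
  move=> f hf; rewrite normrM -mulrA; apply: (ler_wpM2l (normr_ge0 _)).
  exact: H1.
exists (C *+ k.+1) => x hx; rewrite nu_coef_eq //.
apply: le_trans (ler_norm_sum _ _ _) _.
apply: le_trans (ler_sum_nat (G := fun _ => C * nk k x) _) _.
  by move=> i /andP[_ hi]; apply: H.
by rewrite sumr_const_nat subn0 mulrnAl.
Qed.

Section Nu.
Variable one : V.
Hypotheses (hone : one \in B n.+1) (nu1 : nu one = 1)
  (ne1 : forall e, 0 < e -> e < 1 -> nueps e one = 1).
Local Notation c := (cc (fun j => kc j one) n).

Lemma id3 k e f : (k <= n)%N -> 0 < e -> e < 1 ->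
  nueps e f - \sum_(0 <= t < k.+1) nu_coef L nu h Rlam one t f * e ^+ t =
  nueps e h * res k e f
  + (nueps e h - \sum_(0 <= i < k.+1) c i * e ^+ i)
      * \sum_(0 <= j < k.+1) kc j f * e ^+ j
  + \sum_(0 <= i < k.+1) \sum_(0 <= j < k.+1 | (k < i + j)%N)
       (c i * e ^+ i) * (kc j f * e ^+ j).
Proof.
move=> hk e0 e1.
have E1 : (\sum_(0 <= i < k.+1) c i * e ^+ i) * \sum_(0 <= j < k.+1) kc j f * e ^+ j =
   \sum_(0 <= i < k.+1) \sum_(0 <= j < k.+1) (c i * e ^+ i) * (kc j f * e ^+ j).
  by rewrite mulr_suml; apply: eq_bigr => i _; rewrite mulr_sumr.
rewrite sq_split in E1.
have E2 : \sum_(0 <= t < k.+1) \sum_(0 <= i < t.+1)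
     (c i * e ^+ i) * (kc (t - i)%N f * e ^+ (t - i)%N) =
   \sum_(0 <= t < k.+1) nu_coef L nu h Rlam one t f * e ^+ t.
  apply: eq_big_nat => t /andP[_ ht]; rewrite nu_coef_eq; last by slia.
  rewrite mulr_suml; apply: eq_big_nat => i /andP[_ hi].
  have -> : e ^+ t = e ^+ i * e ^+ (t - i)%N by rewrite -exprD subnKC //; slia.
  ring.
rewrite E2 in E1.
set r := res k e f.
have E4 : r = kap e f - \sum_(0 <= i < k.+1) kc i f * e ^+ i by rewrite /r res_eq.
have E5 : nueps e f = nueps e h * (r + \sum_(0 <= i < k.+1) kc i f * e ^+ i).
  by rewrite E4 subrK mulrC divfK // (nuepsh e0 e1).
rewrite E5.
have -> : \sum_(0 <= t < k.+1) nu_coef L nu h Rlam one t f * e ^+ t =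
  (\sum_(0 <= i < k.+1) c i * e ^+ i) * \sum_(0 <= j < k.+1) kc j f * e ^+ j
  - \sum_(0 <= i < k.+1) \sum_(0 <= j < k.+1 | (k < i + j)%N)
       (c i * e ^+ i) * (kc j f * e ^+ j).
  by rewrite E1 addrK.
ring.
Qed.

Lemma id4 k e : (k <= n)%N -> 0 < e -> e < 1 ->
  nueps e h - \sum_(0 <= i < k.+1) c i * e ^+ i =
  - (nueps e h * \sum_(0 <= i < k.+1) \sum_(0 <= j < k.+1 | (k < i + j)%N)
       (kc i one * e ^+ i) * (c j * e ^+ j))
  - nueps e h * (res k e one * \sum_(0 <= i < k.+1) c i * e ^+ i).
Proof.
move=> hk e0 e1.
have k01 : kc 0%N one = 1 by exact: nu1.
have Ea : nueps e h * kap e one = 1.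
  by rewrite (ne1 e0 e1) mul1r mulfV // (nuepsh e0 e1).
have Eb : kap e one = \sum_(0 <= j < k.+1) kc j one * e ^+ j + res k e one.
  by rewrite res_eq addrC subrK.
have Ec : (\sum_(0 <= j < k.+1) kc j one * e ^+ j) * \sum_(0 <= i < k.+1) c i * e ^+ i =
   1 + \sum_(0 <= i < k.+1) \sum_(0 <= j < k.+1 | (k < i + j)%N)
       (kc i one * e ^+ i) * (c j * e ^+ j).
  rewrite mulr_suml (eq_bigr (fun i => \sum_(0 <= j < k.+1)
      (kc i one * e ^+ i) * (c j * e ^+ j))); last by move=> i _; rewrite mulr_sumr.
  rewrite sq_split; congr (_ + _).
  rewrite big_ltn // big_nat1 subnn expr0 !mulr1 cc0 mulr1 k01.
  rewrite big1_seq ?addr0 // => t /andP[_]; rewrite mem_index_iota => /andP[ht htk].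
  have := @ccrec _ (fun j => kc j one) n t ltac:(slia).
  have -> : \sum_(0 <= j < t.+1) (if j == 0%N then 1 else kc j one) * c (t - j)%N =
     \sum_(0 <= j < t.+1) kc j one * c (t - j)%N.
    apply: eq_bigr => j _; case: (j =P 0%N) => [->|/eqP hj]; first by rewrite k01.
    by [].
  move=> H0; rewrite (eq_big_nat _ _ (F2 := fun i => (kc i one * c (t - i)%N) * e ^+ t)).
    by rewrite -mulr_suml H0 mul0r.
  move=> i /andP[_ hi].
  have -> : e ^+ t = e ^+ i * e ^+ (t - i)%N by rewrite -exprD subnKC //; slia.
  ring.
move: Ea Eb Ec.
set Ck := \sum_(0 <= i < k.+1) c i * e ^+ i.
set Pk := \sum_(0 <= j < k.+1) kc j one * e ^+ j.
set T2 := \sum_(0 <= i < k.+1) _.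
set r := res k e one.
set ko := kap e one.
move=> Ea Eb Ec.
transitivity (nueps e h - Ck * (nueps e h * ko)); first by rewrite Ea mulr1.
rewrite Eb.
transitivity (nueps e h - nueps e h * (Pk * Ck) - nueps e h * (r * Ck)); first by ring.
rewrite Ec; ring.
Qed.

Lemma kc_bnd_all k : (k <= n)%N -> exists2 C, 0 <= C &
  forall j f, (j <= k)%N -> f \in B k.+1 -> `|kc j f| <= C * nk k.+1 f.
Proof.
move=> hk.
have := @fin_const K (fun j C => forall f, f \in B k.+1 -> `|kc j f| <= C * nk k.+1 f) k.+1.
case => [j C C' H hC f hf|j hj|C C0 H].
- by apply: le_trans (H f hf) _; apply: nkmul_mono => //; slia.
- exact: (@kc_bnd j k.+1 ltac:(slia) ltac:(slia)).
- by exists C => // j f hj hf; apply: H.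
Qed.

Lemma concl3b (Ch : K) : (forall e, 0 < e -> e < 1 -> `|nueps e h| <= Ch) ->
  forall k, (k <= n)%N ->
  osm k (B k.+1) (nk k.+1) (fun e f =>
    nueps e f - \sum_(0 <= i < k.+1) nu_coef L nu h Rlam one i f * e ^+ i).
Proof.
move=> HCh k hk.
have Ch0 : 0 <= Ch.
  have h2 : (0 : K) < 2^-1 by rewrite invr_gt0 ltr0n.
  have h21 : (2^-1 : K) < 1 by rewrite invf_lt1 ?ltr0n // ltr1n.
  exact: le_trans (normr_ge0 _) (HCh _ h2 h21).
have M0 := @nkM0 k.+1 ltac:(slia).
have M1 : forall x : V, x \in predT -> (0 : K) <= (fun _ => 1) x by move=> x _; exact: ler01.
have hone' : one \in B k.+1 by apply: (Bmono (i := n.+1)) => //; slia.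
have [Ck Ck0 HCk] := kc_bnd_all hk.
apply: osm_ext; first by move=> e e0 e1 f hf; rewrite (id3 f hk e0 e1).
apply: osm_add => //; first apply: osm_add => //.
- exact: (osm_bmul M0 Ch0 HCh (concl2 hk)).
- apply: (osm_mulb (C := Ck *+ k.+1)) => //; first by rewrite mulrn_wge0.
    move=> e e0 e1 x hx.
    by apply: (sum_bnd (b := fun j x => kc j x) M0 Ck0) => // j y hj hy; apply: HCk.
  apply: osm_ext; first by move=> e e0 e1 x _; rewrite (id4 hk e0 e1).
  apply: osm_B => //.
    apply: osm_N; apply: (osm_bmul M1 Ch0 HCh).
    have := @fin_const K
      (fun j C => `|cc (fun j => kc j one) n j| <= C * 1) k.+1.
    case => [p C C' H hC|j _|Cc Cc0 HCc].
    + exact: le_trans H (ler_wpM2r ler01 hC).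
    + by exists `|cc (fun j => kc j one) n j|; rewrite ?mulr1.
    have [C2 C20 HC2] := @tail_bnd K V k predT (fun _ => 1) (fun i => kc i one)
      (fun j _ => cc (fun j => kc j one) n j) Cc M1 Cc0
      (fun j x hj _ => HCc j ltac:(slia)).
    apply: (osm_big M1 C20) => e e0 e1 x hx.
    exact: (HC2 e e0 e1 x hx).
  apply: (osm_bmul M1 Ch0 HCh).
  have [Cp Cp0 HCp] := poly_bnd (cc (fun j => kc j one) n) k.
  apply: (osm_mulb (C := Cp)) => //.
    by move=> e e0 e1 x _; rewrite mulr1; apply: HCp.
  exact: (osm_at hone' (M0 one hone') (concl2 hk)).
- have [C2 C20 HC2] := @tail_bnd K V k (B k.+1) (nk k.+1) (cc (fun j => kc j one) n)
      (fun j x => kc j x) Ck M0 Ck0 (fun j x hj hx => HCk j x hj hx).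
  exact: (osm_big M0 C20 HC2).
Qed.

End Nu.

Lemma main_sec :
  [/\ (forall k, (k <= n)%N ->
         linear_fun (B k) (kappa_coef L nu h Rlam k) /\
         bounded_fun (B k) (normk N k) (kappa_coef L nu h Rlam k)),
      (forall k, (k <= n)%N ->
         fun_norm_to0 (B k.+1) (normk N k.+1)
           (fun eps f => eps ^- k * (nueps eps f / nueps eps h - nu f
                          - \sum_(1 <= i < k.+1) kappa_coef L nu h Rlam i f * eps ^+ i)))
    & forall one : V, one \in B n.+1 -> nu one = 1 ->
        (forall eps, 0 < eps -> eps < 1 -> nueps eps one = 1) ->
        (exists C, forall eps, 0 < eps -> eps < 1 -> `|nueps eps h| <= C) ->
        (forall k, (k <= n)%N ->
           linear_fun (B k) (nu_coef L nu h Rlam one k) /\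
           bounded_fun (B k) (normk N k) (nu_coef L nu h Rlam one k)) /\
        (forall k, (k <= n)%N ->
           fun_norm_to0 (B k.+1) (normk N k.+1)
             (fun eps f => eps ^- k * (nueps eps f
                - \sum_(0 <= i < k.+1) nu_coef L nu h Rlam one i f * eps ^+ i)))].
Proof.
split.
- move=> k hk; have [Hl [C _ HC]] := concl1 hk; split => //; by exists C.
- by move=> k hk; exact: osm_fun (concl2 hk).
- move=> one hone nu1 ne1 [Ch HCh]; split.
  + by move=> k hk; exact: concl3a.
  + by move=> k hk; exact: osm_fun (concl3b hone nu1 ne1 HCh hk).
Qed.

End Main.


Theorem mainTheorem4
  (R : realType) (isC : bool) (V : lmodType (Kfield R isC)) (n : nat)
  (B : nat -> pred V) (N : nat -> V -> Kfield R isC)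
  (L : nat -> V -> V) (Leps : Kfield R isC -> V -> V)
  (lam : Kfield R isC) (h : V) (nu : V -> Kfield R isC)
  (D0 : pred V) (Rlam : V -> V)
  (lameps : Kfield R isC -> Kfield R isC)
  (nueps : Kfield R isC -> V -> Kfield R isC) :
  (* the chain B^0 = V > B^1 > ... > B^{n+1} of linear subspaces *)
  (forall x, x \in B 0%N) ->
  (forall k, (k <= n.+1)%N -> subspace (B k)) ->
  (forall k, (k <= n)%N -> forall x, x \in B k.+1 -> x \in B k) ->
  (* (I) *)
  (forall j, (j <= n)%N -> linear_on (B j) (L j)) ->
  (forall j i, (j <= i)%N -> (i <= n)%N -> forall x, x \in B i -> L j x \in B (i - j)%N) ->
  (forall eps, 0 < eps -> eps < 1 -> linear_on (B 0%N) (Leps eps)) ->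
  (* (II) *)
  lam != 0 -> h \in B n.+1 -> linear_fun (B 0%N) nu ->
  (forall f, nu (L 0%N f) = lam * nu f) -> L 0%N h = lam *: h -> nu h = 1 ->
  subspace D0 -> (forall x, x \in B 1%N -> x \in D0) ->
  (forall f, f \in D0 -> Rlam f \in B 0%N /\
     L 0%N (Rlam f) - lam * nu (Rlam f) *: h - lam *: Rlam f = f) ->
  (forall f g, f \in D0 -> g \in B 0%N ->
     L 0%N g - lam * nu g *: h - lam *: g = f -> g = Rlam f) ->
  (forall i, (1 <= i <= n.+1)%N -> forall x, x \in B i -> Rlam x \in B i) ->
  (* (III) *)
  (forall eps, 0 < eps -> eps < 1 ->
     [/\ linear_fun (B 0%N) (nueps eps),
         forall f, nueps eps (Leps eps f) = lameps eps * nueps eps f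
       & nueps eps h != 0]) ->
  (* (a) *)
  (forall k, (k <= n.+1)%N -> banach (B k) (N k)) ->
  (* (b) *)
  bounded_fun (B 0%N) (N 0%N) nu ->
  (forall j i, (j <= n)%N -> (j <= i)%N -> (i <= n.+1)%N ->
     bounded_op (B i) (N i) (B (i - j)%N) (N (i - j)%N) (L j)) ->
  (exists C, forall eps, 0 < eps -> eps < 1 -> forall f, f \in B 0%N ->
     `|nueps eps f / nueps eps h| <= C * N 0%N f) ->
  bounded_op (B 1%N) (N 1%N) (B 0%N) (N 0%N) Rlam ->
  (forall j, (1 <= j <= n.+1)%N -> bounded_op (B j) (N j) (B j) (N j) Rlam) ->
  (* (c) *)
  (forall j, (j <= n)%N ->
     op_norm_to0 (B j.+1) (N j.+1) (N 0%N)
       (fun eps f => eps ^- j *: (Leps eps f - L 0%N f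
                                 - \sum_(1 <= i < j.+1) eps ^+ i *: L i f))) ->
  (* conclusions *)
  [/\ (forall k, (k <= n)%N ->
         linear_fun (B k) (kappa_coef L nu h Rlam k) /\
         bounded_fun (B k) (normk N k) (kappa_coef L nu h Rlam k)),
      (forall k, (k <= n)%N ->
         fun_norm_to0 (B k.+1) (normk N k.+1)
           (fun eps f => eps ^- k * (nueps eps f / nueps eps h - nu f
                          - \sum_(1 <= i < k.+1) kappa_coef L nu h Rlam i f * eps ^+ i)))
    & forall one : V, one \in B n.+1 -> nu one = 1 ->
        (forall eps, 0 < eps -> eps < 1 -> nueps eps one = 1) ->
        (exists C, forall eps, 0 < eps -> eps < 1 -> `|nueps eps h| <= C) ->
        (forall k, (k <= n)%N ->
           linear_fun (B k) (nu_coef L nu h Rlam one k) /\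
           bounded_fun (B k) (normk N k) (nu_coef L nu h Rlam one k)) /\
        (forall k, (k <= n)%N ->
           fun_norm_to0 (B k.+1) (normk N k.+1)
             (fun eps f => eps ^- k * (nueps eps f
                - \sum_(0 <= i < k.+1) nu_coef L nu h Rlam one i f * eps ^+ i)))].
Proof.
move=> *; eapply main_sec; eassumption.
Qed.
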